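(* Let $(\mathfrak{S},\mathfrak{C})$ be an SZLG-system, i.e. $\mathfrak{S}=\{(V_i,W_{i\oplus_3 1}):i\in\{1,2,3\}\}$ and $\mathfrak{C}=\{\{V_i,W_i\}:i\in\{1,2,3\}\}$. Then $$\Delta_0(\mathfrak{C})=\frac12\sum_{i=1}^3|\langle V_i\rangle-\langle W_i\rangle|,\qquad \Delta_{\min}(\mathfrak{S},\mathfrak{C})=\frac12\max\Big(2\Delta_0(\mathfrak{C}),\ \mathsf{s}_{odd}\big(\langle V_iW_{i\oplus_3 1}\rangle:i\in\{1,2,3\}\big)-1\Big).$$ Consequently $$\mathsf{CNTX}(\mathfrak{S},\mathfrak{C})=\frac12\max\Big(0,\ \mathsf{s}_{odd}\big(\langle V_iW_{i\oplus_3 1}\rangle:i\in\{1,2,3\}\big)-1-\sum_{i=1}^3|\langle V_i\rangle-\langle W_i\rangle|\Big),$$ and the system has a noncontextual description if and only if $$\mathsf{s}_{odd}\big(\langle V_iW_{i\oplus_3 1}\rangle:i\in\{1,2,3\}\big)\le 1+\sum_{i=1}^3|\langle V_i\rangle-\langle W_i\rangle|.$$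
   Context: $\oplus_3$ denotes cyclic addition on $\{1,2,3\}$ ($3\oplus_3 1=1$). All $V_i,W_i$ are $\pm1$-valued random variables. Each pair $(V_i,W_{i\oplus_3 1})$ is jointly distributed, but variables in different pairs are stochastically unrelated (have no given joint distribution); in particular $V_i$ and $W_i$ are never jointly distributed. $\langle\cdot\rangle$ denotes expectation; $\langle V_iW_{i\oplus_3 1}\rangle$ is computed from the given joint distribution of the pair. A coupling of random variables $A,B$ is a jointly distributed pair $(A^*,B^* )$ with $A^*\sim A$, $B^*\sim B$; it is maximal if $\Pr[A^*=B^*]$ is the largest possible over all couplings. A coupling $S$ of $\mathfrak{S}$ is a jointly distributed 6-tuple $(V_1^*,V_2^*,V_3^*,W_1^*,W_2^*,W_3^* )$ with $(V_i^*,W_{i\oplus_3 1}^* )$ distributed as $(V_i,W_{i\oplus_3 1})$ for each $i$. The system has a (maximally) noncontextual description if some coupling $S$ has each $(V_i^*,W_i^* )$ a maximal coupling of $V_i,W_i$. $\Delta_0(\mathfrak{C})=\frac12\sum_i|\langle V_i\rangle-\langle W_i\rangle|$; $\Delta_{\min}(\mathfrak{S},\mathfrak{C})$ is the infimum over all couplings $S$ of $\sum_{i=1}^3\Pr[V_i^*\ne W_i^*]$; $\mathsf{CNTX}(\mathfrak{S},\mathfrak{C})=\Delta_{\min}(\mathfrak{S},\mathfrak{C})-\Delta_0(\mathfrak{C})$. For reals $a_1,\ldots,a_m$, $\mathsf{s}_{odd}(a_1,\ldots,a_m)$ is the maximum of $\sum_{i=1}^m(\pm a_i)$ over all sign choices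 with an odd number of minus signs. *)

(* Defs.v *)
From mathcomp Require Import all_boot all_order all_algebra.
From mathcomp Require Import classical_sets reals.
Set Implicit Arguments. Unset Strict Implicit. Unset Printing Implicit Defensive.
Import Order.TTheory GRing.Theory Num.Theory.
Local Open Scope ring_scope.
Local Open Scope classical_set_scope.

(* A +-1 valued random variable value is encoded by a bool: true = +1, false = -1. *)
Definition sgn {R : numDomainType} (b : bool) : R := if b then 1 else -1.

(* cyclic successor i (+)_3 1 and predecessor on the index set 'I_3 = {0,1,2}
   (standing for {1,2,3}). *)
Definition nxt (i : 'I_3) : 'I_3 := ordS i.
Definition prv (i : 'I_3) : 'I_3 := ord_pred i.

Definition is_dist {R : numDomainType} {T : finType} (p : {ffun T -> R}) : Prop :=
  (forall x, 0 <= p x) /\ \sum_x p x = 1.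

(* An SZLG system: for each i, p i is the joint distribution of the pair
   (V_i, W_{i (+)_3 1}) on {+-1}^2.  Different pairs are stochastically unrelated. *)
Definition system (R : numDomainType) := 'I_3 -> {ffun bool * bool -> R}.

Section Defs.
Variable R : realType.
Variable p : system R.

(* <V_i>, computed from the pair (V_i, W_{i+1}) *)
Definition EV (i : 'I_3) : R := \sum_x p i x * sgn x.1.
(* <W_i>, computed from the pair (V_{i-1}, W_i) *)
Definition EW (i : 'I_3) : R := \sum_x p (prv i) x * sgn x.2.
Definition EVW (i : 'I_3) : R := \sum_x p i x * (sgn x.1 * sgn x.2).

(* 6-tuples of V_1^*, V_2^*, V_3^*, W_1^*, W_2^*, W_3^* values *)
Definition six := ({ffun 'I_3 -> bool} * {ffun 'I_3 -> bool})%type.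

Definition is_coupling (S : {ffun six -> R}) : Prop :=
  is_dist S /\
  forall (i : 'I_3) (x y : bool),
    \sum_(u : six | (u.1 i == x) && (u.2 (nxt i) == y)) S u = p i (x, y).

Definition Pneq (S : {ffun six -> R}) (i : 'I_3) : R :=
  \sum_(u : six | u.1 i != u.2 i) S u.

Definition margVW (S : {ffun six -> R}) (i : 'I_3) : {ffun bool * bool -> R} :=
  [ffun xy => \sum_(u : six | (u.1 i == xy.1) && (u.2 i == xy.2)) S u].

Definition lawV (i : 'I_3) (x : bool) : R := \sum_y p i (x, y).
Definition lawW (i : 'I_3) (y : bool) : R := \sum_x p (prv i) (x, y).

Definition is_coupling_VW (i : 'I_3) (r : {ffun bool * bool -> R}) : Prop :=
  is_dist r /\ (forall x, \sum_y r (x, y) = lawV i x)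
            /\ (forall y, \sum_x r (x, y) = lawW i y).

Definition Peq (r : {ffun bool * bool -> R}) : R := \sum_x r (x, x).

Definition is_maximal_coupling_VW (i : 'I_3) (r : {ffun bool * bool -> R}) : Prop :=
  is_coupling_VW i r /\ forall r', is_coupling_VW i r' -> Peq r' <= Peq r.

Definition noncontextual : Prop :=
  exists S, is_coupling S /\ forall i, is_maximal_coupling_VW i (margVW S i).

Definition Delta0 : R := 2^-1 * \sum_i `|EV i - EW i|.

Definition Delta_min : R :=
  inf [set d | exists S, is_coupling S /\ d = \sum_i Pneq S i].

Definition CNTX : R := Delta_min - Delta0.

End Defs.

Definition s_odd (R : realType) (m : nat) (a : 'I_m -> R) : R :=
  sup [set x | exists s : {ffun 'I_m -> bool},
          odd #|[set i | s i]| /\ x = \sum_i (if s i then - a i else a i)].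

(* Main.v *)
Require Import Defs.
From mathcomp Require Import all_boot all_order all_algebra.
From mathcomp Require Import classical_sets reals.
From mathcomp Require Import ring lra.
Import Order.TTheory GRing.Theory Num.Theory.
Local Open Scope ring_scope.
Set Implicit Arguments. Unset Strict Implicit. Unset Printing Implicit Defensive.

Definition o0 : 'I_3 := @Ordinal 3 0 isT.
Definition o1 : 'I_3 := @Ordinal 3 1 isT.
Definition o2 : 'I_3 := @Ordinal 3 2 isT.

Lemma ord3P (i : 'I_3) : [\/ i = o0, i = o1 | i = o2].
Proof.
case: i => [[|[|[|k]]] Hk].
- by apply: Or31; apply: val_inj.
- by apply: Or32; apply: val_inj.
- by apply: Or33; apply: val_inj.
- by [].
Qed.

Lemma nxt0 : nxt o0 = o1. Proof. by apply: val_inj. Qed.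
Lemma nxt1 : nxt o1 = o2. Proof. by apply: val_inj. Qed.
Lemma nxt2 : nxt o2 = o0. Proof. by apply: val_inj. Qed.
Lemma prv0 : prv o0 = o2. Proof. by apply: val_inj. Qed.
Lemma prv1 : prv o1 = o0. Proof. by apply: val_inj. Qed.
Lemma prv2 : prv o2 = o1. Proof. by apply: val_inj. Qed.
Lemma nxt_prv i : nxt (prv i) = i.
Proof. by case: (ord3P i) => ->; rewrite ?prv0 ?prv1 ?prv2 ?nxt0 ?nxt1 ?nxt2. Qed.

Section S.
Variable R : realType.

Lemma sum3 (F : 'I_3 -> R) : \sum_(i < 3) F i = F o0 + F o1 + F o2.
Proof.
rewrite !big_ord_recr big_ord0 /= GRing.add0r.
by congr (F _ + F _ + F _); apply: val_inj.
Qed.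

Lemma sum_pair (A B : finType) (F : A * B -> R) :
  \sum_t F t = \sum_a \sum_b F (a, b).
Proof. by rewrite pair_bigA; apply: eq_bigr => -[]. Qed.

Lemma sum_bb (F : bool * bool -> R) :
  \sum_x F x = F (true, true) + F (true, false) + F (false, true) + F (false, false).
Proof.
by rewrite sum_pair !big_bool /= GRing.addrA.
Qed.

Definition B6 := (bool * bool * bool * bool * bool * bool)%type.

Lemma sum6 (T : finType) (H : T -> R)
  (mk : bool -> bool -> bool -> bool -> bool -> bool -> T) (un : T -> B6) :
  (forall u, mk (un u).1.1.1.1.1 (un u).1.1.1.1.2 (un u).1.1.1.2 (un u).1.1.2 (un u).1.2 (un u).2 = u) ->
  (forall x1 x2 x3 x4 x5 x6, un (mk x1 x2 x3 x4 x5 x6) = (x1, x2, x3, x4, x5, x6)) ->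
  \sum_u H u = \sum_x1 \sum_x2 \sum_x3 \sum_x4 \sum_x5 \sum_x6 H (mk x1 x2 x3 x4 x5 x6).
Proof.
move=> mkK unK.
pose h (t : B6) := mk t.1.1.1.1.1 t.1.1.1.1.2 t.1.1.1.2 t.1.1.2 t.1.2 t.2.
have hbij : bijective h.
  exists un => [t|u]; last exact: mkK.
  by case: t => [[[[[x1 x2] x3] x4] x5] x6]; rewrite /h unK.
rewrite (reindex h); last exact: onW_bij.
by rewrite !sum_pair.
Qed.

Definition pr2 (mX mY q : R) (x y : bool) : R :=
  if x then (if y then q else mX - q) else (if y then mY - q else 1 - mX - mY + q).

Definition tri3 (mX mY mZ pXY pXZ pYZ tau : R) (x y z : bool) : R :=
  if x then
    (if y then (if z then tau else pXY - tau)
     else (if z then pXZ - tau else mX - pXY - pXZ + tau))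
  else
    (if y then (if z then pYZ - tau else mY - pXY - pYZ + tau)
     else (if z then mZ - pXZ - pYZ + tau else 1 - mX - mY - mZ + pXY + pXZ + pYZ - tau)).

Definition taut (mX mY mZ pXY pXZ pYZ : R) : R :=
  Num.max (Num.max 0 (pXY + pXZ - mX)) (Num.max (pXY + pYZ - mY) (pXZ + pYZ - mZ)).

Definition tri_ok (mX mY mZ pXY pXZ pYZ : R) : Prop :=
  Num.max (Num.max 0 (pXY + pXZ - mX)) (Num.max (pXY + pYZ - mY) (pXZ + pYZ - mZ))
  <= Num.min (Num.min pXY pXZ) (Num.min pYZ (1 - mX - mY - mZ + pXY + pXZ + pYZ)).

Section Tri.
Variables mX mY mZ pXY pXZ pYZ tau : R.
Let T := tri3 mX mY mZ pXY pXZ pYZ tau.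
Lemma tri3_z x y : \sum_z T x y z = pr2 mX mY pXY x y.
Proof. rewrite big_bool /T /tri3 /pr2; case: x; case: y => /=; ring. Qed.
Lemma tri3_y x z : \sum_y T x y z = pr2 mX mZ pXZ x z.
Proof. rewrite big_bool /T /tri3 /pr2; case: x; case: z => /=; ring. Qed.
Lemma tri3_x y z : \sum_x T x y z = pr2 mY mZ pYZ y z.
Proof. rewrite big_bool /T /tri3 /pr2; case: y; case: z => /=; ring. Qed.
End Tri.

Lemma tri3_ge0 mX mY mZ pXY pXZ pYZ : tri_ok mX mY mZ pXY pXZ pYZ ->
  forall x y z, 0 <= tri3 mX mY mZ pXY pXZ pYZ (taut mX mY mZ pXY pXZ pYZ) x y z.
Proof.
rewrite /tri_ok /taut => h.
set tau := Num.max _ _ in h *.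
have l1 : 0 <= tau by rewrite /tau !le_max lexx.
have l2 : pXY + pXZ - mX <= tau by rewrite /tau !le_max lexx !orbT.
have l3 : pXY + pYZ - mY <= tau by rewrite /tau !le_max lexx !orbT.
have l4 : pXZ + pYZ - mZ <= tau by rewrite /tau !le_max lexx !orbT.
move: h; rewrite !le_min => /andP[/andP[u1 u2] /andP[u3 u4]].
clearbody tau.
move=> x y z; rewrite /tri3; case: x; case: y; case: z => /=; lra.
Qed.

Lemma sum_ge0_l (F : bool -> R) b : (forall c, 0 <= F c) -> F b <= \sum_c F c.
Proof. move=> h; rewrite big_bool; case: b => /=; have := h true; have := h false; lra. Qed.

Lemma mul_div_id (m t : R) : 0 <= t -> t <= m -> m * (t / m) = t.
Proof.
move=> t0 tm; have [m0|m0] := eqVneq m 0.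
  by rewrite m0 in tm *; rewrite mul0r; lra.
by rewrite mulrC divfK.
Qed.

Lemma div_ind (m t k : R) : 0 <= t -> t <= m -> (t / k) * (m / m) = t / k.
Proof.
move=> t0 tm; have [m0|m0] := eqVneq m 0.
  rewrite m0 in tm *; have -> : t = 0 by lra.
  by rewrite !mul0r.
by rewrite divff // mulr1.
Qed.

Lemma core (a1 b1 r1 a2 b2 r2 a3 b3 r3 t : R)
  (h0 : 0 <= (r1))
  (h1 : 0 <= (a1 - r1))
  (h2 : 0 <= (b1 - r1))
  (h3 : 0 <= (- a1 - b1 + r1 + 1))
  (h4 : 0 <= (r2))
  (h5 : 0 <= (a2 - r2))
  (h6 : 0 <= (b2 - r2))
  (h7 : 0 <= (- a2 - b2 + r2 + 1))
  (h8 : 0 <= (r3))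
  (h9 : 0 <= (a3 - r3))
  (h10 : 0 <= (b3 - r3))
  (h11 : 0 <= (- a3 - b3 + r3 + 1))
  (h12 : 0 <= (a1 + a2 + a3 - b1 - b2 - b3 + t))
  (h13 : 0 <= (- a1 + a2 + a3 - b1 - b2 + b3 + t))
  (h14 : 0 <= (a1 + a2 - a3 - b1 + b2 - b3 + t))
  (h15 : 0 <= (- a1 + a2 - a3 - b1 + b2 + b3 + t))
  (h16 : 0 <= (a1 - a2 + a3 + b1 - b2 - b3 + t))
  (h17 : 0 <= (- a1 - a2 + a3 + b1 - b2 + b3 + t))
  (h18 : 0 <= (a1 - a2 - a3 + b1 + b2 - b3 + t))
  (h19 : 0 <= (- a1 - a2 - a3 + b1 + b2 + b3 + t))
  (h20 : 0 <= (2 * a1 + 2 * a2 - 2 * a3 + 2 * b1 + 2 * b2 - 2 * b3 - 4 * r1 - 4 * r2 + 4 * r3 + 2 * t))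
  (h21 : 0 <= (2 * a1 - 2 * a2 + 2 * a3 + 2 * b1 - 2 * b2 + 2 * b3 - 4 * r1 + 4 * r2 - 4 * r3 + 2 * t))
  (h22 : 0 <= (- 2 * a1 + 2 * a2 + 2 * a3 - 2 * b1 + 2 * b2 + 2 * b3 + 4 * r1 - 4 * r2 - 4 * r3 + 2 * t))
  (h23 : 0 <= (- 2 * a1 - 2 * a2 - 2 * a3 - 2 * b1 - 2 * b2 - 2 * b3 + 4 * r1 + 4 * r2 + 4 * r3 + 2 * t + 4))
  : exists x y z s1 s2 s3 : R,
    [/\ tri_ok a1 b1 a2 r1 x s1, tri_ok a1 a2 b2 x y r2, tri_ok a1 b2 a3 y z s2,
       tri_ok a1 a3 b3 z s3 r3 & (b1 + a2 - 2 * s1) + (b2 + a3 - 2 * s2) + (b3 + a1 - 2 * s3) <= t].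
Proof.
pose s1 := (Num.min (b1) (a2)).
have s1_u0 : 0 <= (b1) - s1 by rewrite subr_ge0 /s1 !ge_min lexx ?orbT.
have s1_u1 : 0 <= (a2) - s1 by rewrite subr_ge0 /s1 !ge_min lexx ?orbT.
have s1_l0 : 0 <= s1 - 0 by rewrite subr_ge0 /s1 !le_min; repeat (apply/andP; split); [ clear -h0 h2; lra | clear -h4 h5; lra ].
have s1_l1 : 0 <= s1 - (a2 + b1 - 1) by rewrite subr_ge0 /s1 !le_min; repeat (apply/andP; split); [ clear -h6 h7; lra | clear -h1 h3; lra ].
have s1_l2 : 0 <= s1 - (- (1/2) * a1 + (1/2) * a2 + (1/2) * a3 + (1/2) * b1 - (1/2) * b2 + (1/2) * b3 - (1/2) * t) by rewrite subr_ge0 /s1 !le_min; repeat (apply/andP; split); [ clear -h18; lra | clear -h14; lra ].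
have s1_l3 : 0 <= s1 - (- (1/2) * a1 + (1/2) * a2 - (1/2) * a3 + (1/2) * b1 + (1/2) * b2 + (1/2) * b3 - (1/2) * t) by rewrite subr_ge0 /s1 !le_min; repeat (apply/andP; split); [ clear -h16; lra | clear -h12; lra ].
have s1_l4 : 0 <= s1 - ((1/2) * a1 + (1/2) * a2 + (1/2) * a3 + (1/2) * b1 - (1/2) * b2 - (1/2) * b3 - (1/2) * t) by rewrite subr_ge0 /s1 !le_min; repeat (apply/andP; split); [ clear -h19; lra | clear -h15; lra ].
have s1_l5 : 0 <= s1 - ((1/2) * a1 + (1/2) * a2 - (1/2) * a3 + (1/2) * b1 + (1/2) * b2 - (1/2) * b3 - (1/2) * t) by rewrite subr_ge0 /s1 !le_min; repeat (apply/andP; split); [ clear -h17; lra | clear -h13; lra ].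
have s1_l6 : 0 <= s1 - ((1/4) * a1 + (1/4) * a2 + (1/4) * a3 + (3/4) * b1 - (1/4) * b2 + (1/4) * b3 - (1/2) * r1 + (1/2) * r2 - (1/2) * r3 - (1/4) * t - (1/2)) by rewrite subr_ge0 /s1 !le_min; repeat (apply/andP; split); [ clear -h0 h6 h11 h17; lra | clear -h3 h5 h8 h14; lra ].
have s1_l7 : 0 <= s1 - ((1/4) * a1 + (3/4) * a2 - (1/4) * a3 + (3/4) * b1 + (1/4) * b2 - (1/4) * b3 - (1/2) * r1 - (1/2) * r2 + (1/2) * r3 - (1/4) * t - (1/2)) by rewrite subr_ge0 /s1 !le_min; repeat (apply/andP; split); [ clear -h0 h7 h9 h19; lra | clear -h3 h4 h10 h12; lra ].
have s1_l8 : 0 <= s1 - (- (1/4) * a1 + (3/4) * a2 + (1/4) * a3 + (1/4) * b1 + (1/4) * b2 + (1/4) * b3 + (1/2) * r1 - (1/2) * r2 - (1/2) * r3 - (1/4) * t - (1/2)) by rewrite subr_ge0 /s1 !le_min; repeat (apply/andP; split); [ clear -h2 h7 h8 h18; lra | clear -h1 h4 h11 h13; lra ].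
have s1_l9 : 0 <= s1 - (- (1/4) * a1 + (1/4) * a2 - (1/4) * a3 + (1/4) * b1 - (1/4) * b2 - (1/4) * b3 + (1/2) * r1 + (1/2) * r2 + (1/2) * r3 - (1/4) * t) by rewrite subr_ge0 /s1 !le_min; repeat (apply/andP; split); [ clear -h2 h6 h10 h16; lra | clear -h1 h5 h9 h15; lra ].
clearbody s1.
pose x := (Num.min (a1) (Num.min (a1 - r1 + s1) (Num.min (a2 + r1 - s1) (Num.min (a2) (Num.min ((1/2) * a1 + (1/2) * a2 - (1/2) * a3 - (1/2) * b1 + (1/2) * b2 - (1/2) * b3 - r2 + r3 + s1 + (1/2) * t) ((1/2) * a1 - (1/2) * a2 + (1/2) * a3 - (1/2) * b1 - (1/2) * b2 + (1/2) * b3 + r2 - r3 + s1 + (1/2) * t)))))).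
have x_u0 : 0 <= (a1) - x by rewrite subr_ge0 /x !ge_min lexx ?orbT.
have x_u1 : 0 <= (a1 - r1 + s1) - x by rewrite subr_ge0 /x !ge_min lexx ?orbT.
have x_u2 : 0 <= (a2 + r1 - s1) - x by rewrite subr_ge0 /x !ge_min lexx ?orbT.
have x_u3 : 0 <= (a2) - x by rewrite subr_ge0 /x !ge_min lexx ?orbT.
have x_u4 : 0 <= ((1/2) * a1 + (1/2) * a2 - (1/2) * a3 - (1/2) * b1 + (1/2) * b2 - (1/2) * b3 - r2 + r3 + s1 + (1/2) * t) - x by rewrite subr_ge0 /x !ge_min lexx ?orbT.
have x_u5 : 0 <= ((1/2) * a1 - (1/2) * a2 + (1/2) * a3 - (1/2) * b1 - (1/2) * b2 + (1/2) * b3 + r2 - r3 + s1 + (1/2) * t) - x by rewrite subr_ge0 /x !ge_min lexx ?orbT.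
have x_l0 : 0 <= x - 0 by rewrite subr_ge0 /x !le_min; repeat (apply/andP; split); [ clear -h0 h1; lra | clear -h1 s1_l0; lra | clear -h0 s1_u1; lra | clear -h4 h5; lra | clear -h5 h8 s1_l2; lra | clear -h4 h10 s1_l3; lra ].
have x_l1 : 0 <= x - (a1 + a2 + b1 - r1 - s1 - 1) by rewrite subr_ge0 /x !le_min; repeat (apply/andP; split); [ clear -h0 s1_l1; lra | clear -s1_l0 s1_l1; lra | clear -h0 h3; lra | clear -h3 s1_l0; lra | clear -s1_l6; lra | clear -s1_l7; lra ].
have x_l2 : 0 <= x - (- b1 + r1 + s1) by rewrite subr_ge0 /x !le_min; repeat (apply/andP; split); [ clear -h1 s1_u0; lra | clear -h1 h2; lra | clear -s1_u0 s1_u1; lra | clear -h2 s1_u1; lra | clear -h20; lra | clear -h21; lra ].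
have x_l3 : 0 <= x - (a1 + a2 - 1) by rewrite subr_ge0 /x !le_min; repeat (apply/andP; split); [ clear -h6 h7; lra | clear -h2 s1_l1; lra | clear -h3 s1_u0; lra | clear -h2 h3; lra | clear -h6 h11 s1_l5; lra | clear -h7 h9 s1_l4; lra ].
have x_l4 : 0 <= x - ((1/2) * a1 + (3/2) * a2 + (1/2) * a3 + (1/2) * b1 + (1/2) * b2 + (1/2) * b3 - r2 - r3 - s1 - (1/2) * t - 1) by rewrite subr_ge0 /x !le_min; repeat (apply/andP; split); [ clear -h7 h8 s1_l2; lra | clear -s1_l8; lra | clear -h23; lra | clear -h4 h11 s1_l5; lra | clear -h8 h11 s1_l3 s1_l4; lra | clear -h4 h7 s1_l3 s1_l4; lra ].
have x_l5 : 0 <= x - ((1/2) * a1 + (1/2) * a2 - (1/2) * a3 + (1/2) * b1 - (1/2) * b2 - (1/2) * b3 + r2 + r3 - s1 - (1/2) * t) by rewrite subr_ge0 /x !le_min; repeat (apply/andP; split); [ clear -h6 h10 s1_l3; lra | clear -s1_l9; lra | clear -h22; lra | clear -h5 h9 s1_l4; lra | clear -h5 h6 s1_l3 s1_l4; lra | clear -h9 h10 s1_l3 s1_l4; lra ].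
clearbody x.
pose y := (Num.min (a1) (Num.min (a1 + r2 - x) (Num.min (b2 - r2 + x) (Num.min (b2) ((1/2) * a1 - (1/2) * a2 - (1/2) * a3 - (1/2) * b1 + (1/2) * b2 - (1/2) * b3 + r3 + s1 + (1/2) * t))))).
have y_u0 : 0 <= (a1) - y by rewrite subr_ge0 /y !ge_min lexx ?orbT.
have y_u1 : 0 <= (a1 + r2 - x) - y by rewrite subr_ge0 /y !ge_min lexx ?orbT.
have y_u2 : 0 <= (b2 - r2 + x) - y by rewrite subr_ge0 /y !ge_min lexx ?orbT.
have y_u3 : 0 <= (b2) - y by rewrite subr_ge0 /y !ge_min lexx ?orbT.
have y_u4 : 0 <= ((1/2) * a1 - (1/2) * a2 - (1/2) * a3 - (1/2) * b1 + (1/2) * b2 - (1/2) * b3 + r3 + s1 + (1/2) * t) - y by rewrite subr_ge0 /y !ge_min lexx ?orbT.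
have y_l0 : 0 <= y - 0 by rewrite subr_ge0 /y !le_min; repeat (apply/andP; split); [ clear -h0 h1; lra | clear -h4 x_u0; lra | clear -h6 x_l0; lra | clear -h4 h6; lra | clear -h8 s1_l2; lra ].
have y_l1 : 0 <= y - (a1 + a2 + b2 - r2 - x - 1) by rewrite subr_ge0 /y !le_min; repeat (apply/andP; split); [ clear -h7 x_l0; lra | clear -h4 h7; lra | clear -x_l1 x_l2; lra | clear -h4 x_l3; lra | clear -x_l4; lra ].
have y_l2 : 0 <= y - (- a2 + r2 + x) by rewrite subr_ge0 /y !le_min; repeat (apply/andP; split); [ clear -h5 x_u0; lra | clear -x_u1 x_u2; lra | clear -h5 h6; lra | clear -h6 x_u3; lra | clear -x_u4; lra ].
have y_l3 : 0 <= y - (a1 + b2 - 1) by rewrite subr_ge0 /y !le_min; repeat (apply/andP; split); [ clear -h5 h7; lra | clear -h7 x_u3; lra | clear -h5 x_l3; lra | clear -h2 h3; lra | clear -h11 s1_l5; lra ].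
have y_l4 : 0 <= y - ((1/2) * a1 + (1/2) * a2 - (1/2) * a3 + (1/2) * b1 + (1/2) * b2 - (1/2) * b3 + r3 - s1 - (1/2) * t) by rewrite subr_ge0 /y !le_min; repeat (apply/andP; split); [ clear -h10 s1_l3; lra | clear -x_u5; lra | clear -x_l5; lra | clear -h9 s1_l4; lra | clear -s1_l3 s1_l4; lra ].
clearbody y.
pose s2 := (Num.min (b2) (a3)).
have s2_u0 : 0 <= (b2) - s2 by rewrite subr_ge0 /s2 !ge_min lexx ?orbT.
have s2_u1 : 0 <= (a3) - s2 by rewrite subr_ge0 /s2 !ge_min lexx ?orbT.
have s2_l0 : 0 <= s2 - 0 by rewrite subr_ge0 /s2 !le_min; repeat (apply/andP; split); [ clear -h4 h6; lra | clear -h8 h9; lra ].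
have s2_l1 : 0 <= s2 - (a3 + b2 - 1) by rewrite subr_ge0 /s2 !le_min; repeat (apply/andP; split); [ clear -h10 h11; lra | clear -h5 h7; lra ].
have s2_l2 : 0 <= s2 - (- (1/2) * a1 + (1/2) * a2 + (1/2) * a3 + (1/2) * b1 + (1/2) * b2 + (1/2) * b3 - s1 - (1/2) * t) by rewrite subr_ge0 /s2 !le_min; repeat (apply/andP; split); [ clear -s1_l2; lra | clear -s1_l3; lra ].
have s2_l3 : 0 <= s2 - ((1/2) * a1 + (1/2) * a2 + (1/2) * a3 + (1/2) * b1 + (1/2) * b2 - (1/2) * b3 - s1 - (1/2) * t) by rewrite subr_ge0 /s2 !le_min; repeat (apply/andP; split); [ clear -s1_l4; lra | clear -s1_l5; lra ].
have s2_l4 : 0 <= s2 - ((1/4) * a1 + (1/4) * a2 + (3/4) * a3 + (1/4) * b1 + (3/4) * b2 + (1/4) * b3 - (1/2) * r3 - (1/2) * s1 - (1/4) * t - (1/2) * y - (1/2)) by rewrite subr_ge0 /s2 !le_min; repeat (apply/andP; split); [ clear -h11 s1_l4 y_l0; lra | clear -h8 s1_l3 y_l3; lra ].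
have s2_l5 : 0 <= s2 - (- (1/4) * a1 + (1/4) * a2 + (1/4) * a3 + (1/4) * b1 + (1/4) * b2 - (1/4) * b3 + (1/2) * r3 - (1/2) * s1 - (1/4) * t + (1/2) * y) by rewrite subr_ge0 /s2 !le_min; repeat (apply/andP; split); [ clear -h10 s1_l2 y_u3; lra | clear -h9 s1_l5 y_u0; lra ].
clearbody s2.
pose z := (Num.min (a1) (Num.min (a1 + s2 - y) (Num.min (a3 - s2 + y) (Num.min (a3) ((1/2) * a1 - (1/2) * a2 - (1/2) * a3 - (1/2) * b1 - (1/2) * b2 - (1/2) * b3 + r3 + s1 + s2 + (1/2) * t))))).
have z_u0 : 0 <= (a1) - z by rewrite subr_ge0 /z !ge_min lexx ?orbT.
have z_u1 : 0 <= (a1 + s2 - y) - z by rewrite subr_ge0 /z !ge_min lexx ?orbT.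
have z_u2 : 0 <= (a3 - s2 + y) - z by rewrite subr_ge0 /z !ge_min lexx ?orbT.
have z_u3 : 0 <= (a3) - z by rewrite subr_ge0 /z !ge_min lexx ?orbT.
have z_u4 : 0 <= ((1/2) * a1 - (1/2) * a2 - (1/2) * a3 - (1/2) * b1 - (1/2) * b2 - (1/2) * b3 + r3 + s1 + s2 + (1/2) * t) - z by rewrite subr_ge0 /z !ge_min lexx ?orbT.
have z_l0 : 0 <= z - 0 by rewrite subr_ge0 /z !le_min; repeat (apply/andP; split); [ clear -h0 h1; lra | clear -y_u0 s2_l0; lra | clear -y_l0 s2_u1; lra | clear -h8 h9; lra | clear -h8 s2_l2; lra ].
have z_l1 : 0 <= z - (a1 + a3 + b2 - s2 - y - 1) by rewrite subr_ge0 /z !le_min; repeat (apply/andP; split); [ clear -y_l0 s2_l1; lra | clear -s2_l0 s2_l1; lra | clear -y_l1 y_l2; lra | clear -y_l3 s2_l0; lra | clear -s2_l4; lra ].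
have z_l2 : 0 <= z - (- b2 + s2 + y) by rewrite subr_ge0 /z !le_min; repeat (apply/andP; split); [ clear -y_u0 s2_u0; lra | clear -y_u1 y_u2; lra | clear -s2_u0 s2_u1; lra | clear -y_u3 s2_u1; lra | clear -y_u4; lra ].
have z_l3 : 0 <= z - (a1 + a3 - 1) by rewrite subr_ge0 /z !le_min; repeat (apply/andP; split); [ clear -h10 h11; lra | clear -y_u3 s2_l1; lra | clear -y_l3 s2_u0; lra | clear -h2 h3; lra | clear -h11 s2_l3; lra ].
have z_l4 : 0 <= z - ((1/2) * a1 + (1/2) * a2 + (1/2) * a3 + (1/2) * b1 + (1/2) * b2 - (1/2) * b3 + r3 - s1 - s2 - (1/2) * t) by rewrite subr_ge0 /z !le_min; repeat (apply/andP; split); [ clear -h10 s2_l2; lra | clear -s2_l5; lra | clear -y_l4; lra | clear -h9 s2_l3; lra | clear -s2_l2 s2_l3; lra ].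
clearbody z.
pose s3 := (Num.min (a1) (Num.min (a1 + r3 - z) (Num.min (b3 - r3 + z) (b3)))).
have s3_u0 : 0 <= (a1) - s3 by rewrite subr_ge0 /s3 !ge_min lexx ?orbT.
have s3_u1 : 0 <= (a1 + r3 - z) - s3 by rewrite subr_ge0 /s3 !ge_min lexx ?orbT.
have s3_u2 : 0 <= (b3 - r3 + z) - s3 by rewrite subr_ge0 /s3 !ge_min lexx ?orbT.
have s3_u3 : 0 <= (b3) - s3 by rewrite subr_ge0 /s3 !ge_min lexx ?orbT.
have s3_l0 : 0 <= s3 - 0 by rewrite subr_ge0 /s3 !le_min; repeat (apply/andP; split); [ clear -h0 h1; lra | clear -h8 z_u0; lra | clear -h10 z_l0; lra | clear -h8 h10; lra ].
have s3_l1 : 0 <= s3 - (a1 + a3 + b3 - r3 - z - 1) by rewrite subr_ge0 /s3 !le_min; repeat (apply/andP; split); [ clear -h11 z_l0; lra | clear -h8 h11; lra | clear -z_l1 z_l2; lra | clear -h8 z_l3; lra ].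
have s3_l2 : 0 <= s3 - (- a3 + r3 + z) by rewrite subr_ge0 /s3 !le_min; repeat (apply/andP; split); [ clear -h9 z_u0; lra | clear -z_u1 z_u2; lra | clear -h9 h10; lra | clear -h10 z_u3; lra ].
have s3_l3 : 0 <= s3 - (a1 + b3 - 1) by rewrite subr_ge0 /s3 !le_min; repeat (apply/andP; split); [ clear -h9 h11; lra | clear -h11 z_u3; lra | clear -h9 z_l3; lra | clear -h2 h3; lra ].
have s3_l4 : 0 <= s3 - ((1/2) * a1 + (1/2) * a2 + (1/2) * a3 + (1/2) * b1 + (1/2) * b2 + (1/2) * b3 - s1 - s2 - (1/2) * t) by rewrite subr_ge0 /s3 !le_min; repeat (apply/andP; split); [ clear -s2_l2; lra | clear -z_u4; lra | clear -z_l4; lra | clear -s2_l3; lra ].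
clearbody s3.
exists x, y, z, s1, s2, s3.
split.
- rewrite /tri_ok !ge_max !le_min; repeat (apply/andP; split); [ clear -h0; lra | clear -x_l0; lra | clear -s1_l0; lra | clear -x_l1; lra | clear -x_u0; lra | clear -h1; lra | clear -x_u1; lra | clear -s1_l1; lra | clear -s1_u0; lra | clear -x_l2; lra | clear -h2; lra | clear -x_l3; lra | clear -x_u2; lra | clear -s1_u1; lra | clear -x_u3; lra | clear -h3; lra ].
- rewrite /tri_ok !ge_max !le_min; repeat (apply/andP; split); [ clear -x_l0; lra | clear -y_l0; lra | clear -h4; lra | clear -y_l1; lra | clear -y_u0; lra | clear -x_u0; lra | clear -y_u1; lra | clear -h7; lra | clear -h5; lra | clear -y_l2; lra | clear -x_u3; lra | clear -y_l3; lra | clear -y_u2; lra | clear -h6; lra | clear -y_u3; lra | clear -x_l3; lra ].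
- rewrite /tri_ok !ge_max !le_min; repeat (apply/andP; split); [ clear -y_l0; lra | clear -z_l0; lra | clear -s2_l0; lra | clear -z_l1; lra | clear -z_u0; lra | clear -y_u0; lra | clear -z_u1; lra | clear -s2_l1; lra | clear -s2_u0; lra | clear -z_l2; lra | clear -y_u3; lra | clear -z_l3; lra | clear -z_u2; lra | clear -s2_u1; lra | clear -z_u3; lra | clear -y_l3; lra ].
- rewrite /tri_ok !ge_max !le_min; repeat (apply/andP; split); [ clear -z_l0; lra | clear -s3_l0; lra | clear -h8; lra | clear -s3_l1; lra | clear -s3_u0; lra | clear -z_u0; lra | clear -s3_u1; lra | clear -h11; lra | clear -h9; lra | clear -s3_l2; lra | clear -z_u3; lra | clear -s3_l3; lra | clear -s3_u2; lra | clear -h10; lra | clear -s3_u3; lra | clear -z_l3; lra ].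
- clear -s3_l4; lra.
Qed.

Lemma mul_ind (m t : R) : 0 <= t -> t <= m -> t * (m / m) = t.
Proof. by move=> t0 tm; have := div_ind 1 t0 tm; rewrite !divr1. Qed.

Section Glue.
Variables A1 B1 P1 A2 B2 P2 A3 B3 P3 X Y Z S1 S2 S3 : R.
Hypothesis ok1 : tri_ok A1 B1 A2 P1 X S1.
Hypothesis ok2 : tri_ok A1 A2 B2 X Y P2.
Hypothesis ok3 : tri_ok A1 B2 A3 Y Z S2.
Hypothesis ok4 : tri_ok A1 A3 B3 Z S3 P3.

Definition T1 := tri3 A1 B1 A2 P1 X S1 (taut A1 B1 A2 P1 X S1).
Definition T2 := tri3 A1 A2 B2 X Y P2 (taut A1 A2 B2 X Y P2).
Definition T3 := tri3 A1 B2 A3 Y Z S2 (taut A1 B2 A3 Y Z S2).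
Definition T4 := tri3 A1 A3 B3 Z S3 P3 (taut A1 A3 B3 Z S3 P3).
Definition M12 := pr2 A1 A2 X.
Definition M1b := pr2 A1 B2 Y.
Definition M13 := pr2 A1 A3 Z.
Definition c2 a1 a2 b2 := T2 a1 a2 b2 / M12 a1 a2.
Definition c3 a1 b2 a3 := T3 a1 b2 a3 / M1b a1 b2.
Definition c4 a1 a3 b3 := T4 a1 a3 b3 / M13 a1 a3.
Definition G a1 b1 a2 b2 a3 b3 :=
  T1 a1 b1 a2 * c2 a1 a2 b2 * c3 a1 b2 a3 * c4 a1 a3 b3.

Lemma T1_ge0 a b c : 0 <= T1 a b c. Proof. exact: tri3_ge0. Qed.
Lemma T2_ge0 a b c : 0 <= T2 a b c. Proof. exact: tri3_ge0. Qed.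
Lemma T3_ge0 a b c : 0 <= T3 a b c. Proof. exact: tri3_ge0. Qed.
Lemma T4_ge0 a b c : 0 <= T4 a b c. Proof. exact: tri3_ge0. Qed.

Lemma F1 a1 a2 : \sum_b1 T1 a1 b1 a2 = M12 a1 a2. Proof. exact: tri3_y. Qed.
Lemma F2 a1 a2 : \sum_b2 T2 a1 a2 b2 = M12 a1 a2. Proof. exact: tri3_z. Qed.
Lemma F2' a1 b2 : \sum_a2 T2 a1 a2 b2 = M1b a1 b2. Proof. exact: tri3_y. Qed.
Lemma F3 a1 b2 : \sum_a3 T3 a1 b2 a3 = M1b a1 b2. Proof. exact: tri3_z. Qed.
Lemma F3' a1 a3 : \sum_b2 T3 a1 b2 a3 = M13 a1 a3. Proof. exact: tri3_y. Qed.
Lemma F4 a1 a3 : \sum_b3 T4 a1 a3 b3 = M13 a1 a3. Proof. exact: tri3_z. Qed.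

Lemma M12_ge0 a b : 0 <= M12 a b.
Proof. by rewrite -F1; apply: sumr_ge0 => *; apply: T1_ge0. Qed.
Lemma M1b_ge0 a b : 0 <= M1b a b.
Proof. by rewrite -F3; apply: sumr_ge0 => *; apply: T3_ge0. Qed.
Lemma M13_ge0 a b : 0 <= M13 a b.
Proof. by rewrite -F4; apply: sumr_ge0 => *; apply: T4_ge0. Qed.

Lemma G_ge0 a1 b1 a2 b2 a3 b3 : 0 <= G a1 b1 a2 b2 a3 b3.
Proof.
rewrite /G /c2 /c3 /c4.
repeat apply: mulr_ge0; rewrite ?invr_ge0;
  first [apply: T1_ge0 | apply: T2_ge0 | apply: T3_ge0 | apply: T4_ge0 |
      apply: M12_ge0 | apply: M1b_ge0 | apply: M13_ge0].
Qed.

Lemma sc2 a1 a2 : \sum_b2 c2 a1 a2 b2 = M12 a1 a2 / M12 a1 a2.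
Proof. by rewrite /c2 -big_distrl /= F2. Qed.
Lemma sc3 a1 b2 : \sum_a3 c3 a1 b2 a3 = M1b a1 b2 / M1b a1 b2.
Proof. by rewrite /c3 -big_distrl /= F3. Qed.
Lemma sc4 a1 a3 : \sum_b3 c4 a1 a3 b3 = M13 a1 a3 / M13 a1 a3.
Proof. by rewrite /c4 -big_distrl /= F4. Qed.

Lemma ind1 a1 b1 a2 : T1 a1 b1 a2 * (M12 a1 a2 / M12 a1 a2) = T1 a1 b1 a2.
Proof. apply: mul_ind; first exact: T1_ge0. by rewrite -F1; apply: (@sum_ge0_l (fun c => T1 a1 c a2)) => c; apply: T1_ge0. Qed.
Lemma ind2 a1 a2 b2 : c2 a1 a2 b2 * (M1b a1 b2 / M1b a1 b2) = c2 a1 a2 b2.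
Proof. apply: div_ind; first exact: T2_ge0. by rewrite -F2'; apply: (@sum_ge0_l (fun c => T2 a1 c b2)) => c; apply: T2_ge0. Qed.
Lemma ind3 a1 b2 a3 : c3 a1 b2 a3 * (M13 a1 a3 / M13 a1 a3) = c3 a1 b2 a3.
Proof. apply: div_ind; first exact: T3_ge0. by rewrite -F3'; apply: (@sum_ge0_l (fun c => T3 a1 c a3)) => c; apply: T3_ge0. Qed.

Lemma fw2 a1 a2 b2 : M12 a1 a2 * c2 a1 a2 b2 = T2 a1 a2 b2.
Proof. apply: mul_div_id; first exact: T2_ge0. by rewrite -F2; apply: (@sum_ge0_l (fun c => T2 a1 a2 c)) => c; apply: T2_ge0. Qed.
Lemma fw3 a1 b2 a3 : M1b a1 b2 * c3 a1 b2 a3 = T3 a1 b2 a3.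
Proof. apply: mul_div_id; first exact: T3_ge0. by rewrite -F3; apply: (@sum_ge0_l (fun c => T3 a1 b2 c)) => c; apply: T3_ge0. Qed.
Lemma fw4 a1 a3 b3 : M13 a1 a3 * c4 a1 a3 b3 = T4 a1 a3 b3.
Proof. apply: mul_div_id; first exact: T4_ge0. by rewrite -F4; apply: (@sum_ge0_l (fun c => T4 a1 a3 c)) => c; apply: T4_ge0. Qed.

Lemma back4 a1 b1 a2 b2 a3 :
  \sum_b3 G a1 b1 a2 b2 a3 b3 = T1 a1 b1 a2 * c2 a1 a2 b2 * c3 a1 b2 a3.
Proof. by rewrite /G -big_distrr /= sc4 -mulrA ind3. Qed.
Lemma back3 a1 b1 a2 b2 :
  \sum_a3 \sum_b3 G a1 b1 a2 b2 a3 b3 = T1 a1 b1 a2 * c2 a1 a2 b2.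
Proof.
under eq_bigr => a3 _ do rewrite back4.
by rewrite -big_distrr /= sc3 -mulrA ind2.
Qed.
Lemma back2 a1 b1 a2 :
  \sum_b2 \sum_a3 \sum_b3 G a1 b1 a2 b2 a3 b3 = T1 a1 b1 a2.
Proof.
under eq_bigr => b2 _ do rewrite back3.
by rewrite -big_distrr /= sc2 ind1.
Qed.
Lemma fwd1 a1 a2 b2 a3 b3 :
  \sum_b1 G a1 b1 a2 b2 a3 b3 = T2 a1 a2 b2 * c3 a1 b2 a3 * c4 a1 a3 b3.
Proof. by rewrite /G -!big_distrl /= F1 fw2. Qed.
Lemma fwd2 a1 b2 a3 b3 :
  \sum_a2 \sum_b1 G a1 b1 a2 b2 a3 b3 = T3 a1 b2 a3 * c4 a1 a3 b3.
Proof.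
under eq_bigr => a2 _ do rewrite fwd1.
by rewrite -!big_distrl /= F2' fw3.
Qed.
Lemma fwd3 a1 a3 b3 :
  \sum_b2 \sum_a2 \sum_b1 G a1 b1 a2 b2 a3 b3 = T4 a1 a3 b3.
Proof.
under eq_bigr => b2 _ do rewrite fwd2.
by rewrite -!big_distrl /= F3' fw4.
Qed.

Lemma margC1 a1 b1 : \sum_a2 \sum_b2 \sum_a3 \sum_b3 G a1 b1 a2 b2 a3 b3 = pr2 A1 B1 P1 a1 b1.
Proof. under eq_bigr => a2 _ do rewrite back2. exact: tri3_z. Qed.
Lemma margN1 b1 a2 : \sum_a1 \sum_b2 \sum_a3 \sum_b3 G a1 b1 a2 b2 a3 b3 = pr2 B1 A2 S1 b1 a2.
Proof. under eq_bigr => a1 _ do rewrite back2. exact: tri3_x. Qed.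
Lemma margC2 a2 b2 : \sum_a1 \sum_b1 \sum_a3 \sum_b3 G a1 b1 a2 b2 a3 b3 = pr2 A2 B2 P2 a2 b2.
Proof.
under eq_bigr => a1 _ do (under eq_bigr => b1 _ do rewrite back3; rewrite -big_distrl /= F1 fw2).
exact: tri3_x.
Qed.
Lemma margN2 b2 a3 : \sum_a1 \sum_a2 \sum_b1 \sum_b3 G a1 b1 a2 b2 a3 b3 = pr2 B2 A3 S2 b2 a3.
Proof.
under eq_bigr => a1 _ do (under eq_bigr => a2 _ do (under eq_bigr => b1 _ do rewrite back4;
  rewrite -!big_distrl /= F1 fw2); rewrite -!big_distrl /= F2' fw3).
exact: tri3_x.
Qed.
Lemma margC3 a3 b3 : \sum_a1 \sum_b2 \sum_a2 \sum_b1 G a1 b1 a2 b2 a3 b3 = pr2 A3 B3 P3 a3 b3.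
Proof. under eq_bigr => a1 _ do rewrite fwd3. exact: tri3_x. Qed.
Lemma margN3 a1 b3 : \sum_a3 \sum_b2 \sum_a2 \sum_b1 G a1 b1 a2 b2 a3 b3 = pr2 A1 B3 S3 a1 b3.
Proof. under eq_bigr => a3 _ do rewrite fwd3. exact: tri3_y. Qed.
End Glue.

Definition mkv (v0 v1 v2 : bool) : {ffun 'I_3 -> bool} :=
  [ffun i => if i == o0 then v0 else if i == o1 then v1 else v2].
Lemma mkv0 a b c : mkv a b c o0 = a. Proof. by rewrite ffunE. Qed.
Lemma mkv1 a b c : mkv a b c o1 = b. Proof. by rewrite ffunE. Qed.
Lemma mkv2 a b c : mkv a b c o2 = c. Proof. by rewrite ffunE. Qed.
Lemma mkvK (v : {ffun 'I_3 -> bool}) : mkv (v o0) (v o1) (v o2) = v.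
Proof. by apply/ffunP => i; rewrite ffunE; case: (ord3P i) => ->. Qed.

Lemma sumK (H : six -> R) (K : bool -> bool -> bool -> bool -> bool -> bool -> R)
  (mk : bool -> bool -> bool -> bool -> bool -> bool -> six) (un : six -> B6) :
  (forall u, mk (un u).1.1.1.1.1 (un u).1.1.1.1.2 (un u).1.1.1.2 (un u).1.1.2 (un u).1.2 (un u).2 = u) ->
  (forall x1 x2 x3 x4 x5 x6, un (mk x1 x2 x3 x4 x5 x6) = (x1, x2, x3, x4, x5, x6)) ->
  (forall x1 x2 x3 x4 x5 x6, H (mk x1 x2 x3 x4 x5 x6) = K x1 x2 x3 x4 x5 x6) ->
  \sum_u H u = \sum_x1 \sum_x2 \sum_x3 \sum_x4 \sum_x5 \sum_x6 K x1 x2 x3 x4 x5 x6.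
Proof.
move=> h1 h2 h3; rewrite (sum6 H h1 h2).
by do 6! (apply: eq_bigr => ? _); apply: h3.
Qed.

Section Orders.
Variable K : bool -> bool -> bool -> bool -> bool -> bool -> R.
Let H (u : six) := K (u.1 o0) (u.2 o1) (u.1 o1) (u.2 o2) (u.1 o2) (u.2 o0).
Ltac solve_mk := 
  first [ by move=> [v w] /=; rewrite !mkvK | by move=> *; rewrite /H /= ?mkv0 ?mkv1 ?mkv2 | by move=> * /=; rewrite ?mkv0 ?mkv1 ?mkv2 ].

Lemma sumC1 : \sum_u H u = \sum_a1 \sum_b1 \sum_a2 \sum_b2 \sum_a3 \sum_b3 K a1 b1 a2 b2 a3 b3.
Proof.
apply: (sumK (mk := fun a1 b1 a2 b2 a3 b3 => (mkv a1 a2 a3, mkv b3 b1 b2))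
  (un := fun u => (u.1 o0, u.2 o1, u.1 o1, u.2 o2, u.1 o2, u.2 o0))); solve_mk.
Qed.
Lemma sumN1 : \sum_u H u = \sum_b1 \sum_a2 \sum_a1 \sum_b2 \sum_a3 \sum_b3 K a1 b1 a2 b2 a3 b3.
Proof.
apply: (sumK (mk := fun b1 a2 a1 b2 a3 b3 => (mkv a1 a2 a3, mkv b3 b1 b2))
  (un := fun u => (u.2 o1, u.1 o1, u.1 o0, u.2 o2, u.1 o2, u.2 o0))); solve_mk.
Qed.
Lemma sumC2 : \sum_u H u = \sum_a2 \sum_b2 \sum_a1 \sum_b1 \sum_a3 \sum_b3 K a1 b1 a2 b2 a3 b3.
Proof.
apply: (sumK (mk := fun a2 b2 a1 b1 a3 b3 => (mkv a1 a2 a3, mkv b3 b1 b2))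
  (un := fun u => (u.1 o1, u.2 o2, u.1 o0, u.2 o1, u.1 o2, u.2 o0))); solve_mk.
Qed.
Lemma sumN2 : \sum_u H u = \sum_b2 \sum_a3 \sum_a1 \sum_a2 \sum_b1 \sum_b3 K a1 b1 a2 b2 a3 b3.
Proof.
apply: (sumK (mk := fun b2 a3 a1 a2 b1 b3 => (mkv a1 a2 a3, mkv b3 b1 b2))
  (un := fun u => (u.2 o2, u.1 o2, u.1 o0, u.1 o1, u.2 o1, u.2 o0))); solve_mk.
Qed.
Lemma sumC3 : \sum_u H u = \sum_a3 \sum_b3 \sum_a1 \sum_b2 \sum_a2 \sum_b1 K a1 b1 a2 b2 a3 b3.
Proof.
apply: (sumK (mk := fun a3 b3 a1 b2 a2 b1 => (mkv a1 a2 a3, mkv b3 b1 b2))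
  (un := fun u => (u.1 o2, u.2 o0, u.1 o0, u.2 o2, u.1 o1, u.2 o1))); solve_mk.
Qed.
Lemma sumN3 : \sum_u H u = \sum_a1 \sum_b3 \sum_a3 \sum_b2 \sum_a2 \sum_b1 K a1 b1 a2 b2 a3 b3.
Proof.
apply: (sumK (mk := fun a1 b3 a3 b2 a2 b1 => (mkv a1 a2 a3, mkv b3 b1 b2))
  (un := fun u => (u.1 o0, u.2 o0, u.1 o2, u.2 o2, u.1 o1, u.2 o1))); solve_mk.
Qed.
End Orders.

Lemma sum4_mull (F : bool -> bool -> bool -> bool -> R) k :
  \sum_a \sum_b \sum_c \sum_d (F a b c d * k) = (\sum_a \sum_b \sum_c \sum_d F a b c d) * k.
Proof.
rewrite big_distrl; apply: eq_bigr => a _; rewrite big_distrl; apply: eq_bigr => b _.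
rewrite big_distrl; apply: eq_bigr => c _; by rewrite big_distrl.
Qed.

Section Sys.
Variable p : system R.
Hypothesis hp : forall i, is_dist (p i).

Definition Aa i := p i (true, true) + p i (true, false).
Definition Bb i := p i (true, true) + p i (false, true).
Definition Pp i := p i (true, true).

Lemma pE i x y : p i (x, y) = pr2 (Aa i) (Bb i) (Pp i) x y.
Proof.
have [_ hs] := hp i; rewrite sum_bb in hs.
by rewrite /pr2 /Aa /Bb /Pp; case: x; case: y => /=; lra.
Qed.

Lemma ind_pr2 (mX mY q : R) x y :
  \sum_a \sum_b pr2 mX mY q a b * ((a == x) && (b == y))%:R = pr2 mX mY q x y.
Proof. by rewrite !big_bool; case: x; case: y; rewrite /= !mulr1 !mulr0 ?addr0 ?add0r. Qed.

Lemma big_ind (S : {ffun six -> R}) (P : pred six) :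
  \sum_(u | P u) S u = \sum_u S u * (P u)%:R.
Proof. by rewrite big_mkcond; apply: eq_bigr => u _; case: (P u); rewrite ?mulr1 ?mulr0. Qed.

Section Cons.
Variables X Y Z S1 S2 S3 : R.
Let A1 := Aa o0. Let B1 := Bb o0. Let P1 := Pp o0.
Let A2 := Aa o1. Let B2 := Bb o1. Let P2 := Pp o1.
Let A3 := Aa o2. Let B3 := Bb o2. Let P3 := Pp o2.
Hypothesis ok1 : tri_ok A1 B1 A2 P1 X S1.
Hypothesis ok2 : tri_ok A1 A2 B2 X Y P2.
Hypothesis ok3 : tri_ok A1 B2 A3 Y Z S2.
Hypothesis ok4 : tri_ok A1 A3 B3 Z S3 P3.
Let Gp := G A1 B1 P1 A2 B2 P2 A3 B3 P3 X Y Z S1 S2 S3.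
Definition Sc : {ffun six -> R} :=
  [ffun u : six => Gp (u.1 o0) (u.2 o1) (u.1 o1) (u.2 o2) (u.1 o2) (u.2 o0)].

Let Gu (u : six) := Gp (u.1 o0) (u.2 o1) (u.1 o1) (u.2 o2) (u.1 o2) (u.2 o0).
Lemma ScE (F : six -> R) : \sum_u Sc u * F u = \sum_u Gu u * F u.
Proof. by apply: eq_bigr => u _; rewrite ffunE. Qed.

Lemma EC1 (F : bool -> bool -> R) :
  \sum_(u : six) Sc u * F (u.1 o0) (u.2 o1) = \sum_a \sum_b pr2 A1 B1 P1 a b * F a b.
Proof.
rewrite (ScE (fun u => F (u.1 o0) (u.2 o1))) /Gu.
rewrite (sumC1 (fun a1 b1 a2 b2 a3 b3 => Gp a1 b1 a2 b2 a3 b3 * F a1 b1)).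
apply: eq_bigr => a1 _; apply: eq_bigr => b1 _.
by rewrite (sum4_mull (fun a2 b2 a3 b3 => Gp a1 b1 a2 b2 a3 b3)) /Gp margC1.
Qed.
Lemma EN1 (F : bool -> bool -> R) :
  \sum_(u : six) Sc u * F (u.2 o1) (u.1 o1) = \sum_a \sum_b pr2 B1 A2 S1 a b * F a b.
Proof.
rewrite (ScE (fun u => F (u.2 o1) (u.1 o1))) /Gu.
rewrite (sumN1 (fun a1 b1 a2 b2 a3 b3 => Gp a1 b1 a2 b2 a3 b3 * F b1 a2)).
apply: eq_bigr => b1 _; apply: eq_bigr => a2 _.
by rewrite (sum4_mull (fun a1 b2 a3 b3 => Gp a1 b1 a2 b2 a3 b3)) /Gp margN1.
Qed.
Lemma EC2 (F : bool -> bool -> R) :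
  \sum_(u : six) Sc u * F (u.1 o1) (u.2 o2) = \sum_a \sum_b pr2 A2 B2 P2 a b * F a b.
Proof.
rewrite (ScE (fun u => F (u.1 o1) (u.2 o2))) /Gu.
rewrite (sumC2 (fun a1 b1 a2 b2 a3 b3 => Gp a1 b1 a2 b2 a3 b3 * F a2 b2)).
apply: eq_bigr => a2 _; apply: eq_bigr => b2 _.
by rewrite (sum4_mull (fun a1 b1 a3 b3 => Gp a1 b1 a2 b2 a3 b3)) /Gp margC2.
Qed.
Lemma EN2 (F : bool -> bool -> R) :
  \sum_(u : six) Sc u * F (u.2 o2) (u.1 o2) = \sum_a \sum_b pr2 B2 A3 S2 a b * F a b.
Proof.
rewrite (ScE (fun u => F (u.2 o2) (u.1 o2))) /Gu.
rewrite (sumN2 (fun a1 b1 a2 b2 a3 b3 => Gp a1 b1 a2 b2 a3 b3 * F b2 a3)).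
apply: eq_bigr => b2 _; apply: eq_bigr => a3 _.
by rewrite (sum4_mull (fun a1 a2 b1 b3 => Gp a1 b1 a2 b2 a3 b3)) /Gp margN2.
Qed.
Lemma EC3 (F : bool -> bool -> R) :
  \sum_(u : six) Sc u * F (u.1 o2) (u.2 o0) = \sum_a \sum_b pr2 A3 B3 P3 a b * F a b.
Proof.
rewrite (ScE (fun u => F (u.1 o2) (u.2 o0))) /Gu.
rewrite (sumC3 (fun a1 b1 a2 b2 a3 b3 => Gp a1 b1 a2 b2 a3 b3 * F a3 b3)).
apply: eq_bigr => a3 _; apply: eq_bigr => b3 _.
by rewrite (sum4_mull (fun a1 b2 a2 b1 => Gp a1 b1 a2 b2 a3 b3)) /Gp margC3.
Qed.
Lemma EN3 (F : bool -> bool -> R) :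
  \sum_(u : six) Sc u * F (u.1 o0) (u.2 o0) = \sum_a \sum_b pr2 A1 B3 S3 a b * F a b.
Proof.
rewrite (ScE (fun u => F (u.1 o0) (u.2 o0))) /Gu.
rewrite (sumN3 (fun a1 b1 a2 b2 a3 b3 => Gp a1 b1 a2 b2 a3 b3 * F a1 b3)).
apply: eq_bigr => a1 _; apply: eq_bigr => b3 _.
by rewrite (sum4_mull (fun a3 b2 a2 b1 => Gp a1 b1 a2 b2 a3 b3)) /Gp margN3.
Qed.

Lemma Sc_coupling : is_coupling p Sc.
Proof.
split; first split.
- by move=> u; rewrite ffunE; apply: G_ge0.
- have := EC1 (fun _ _ => 1).
  under eq_bigr => u _ do rewrite mulr1.
  move=> ->; rewrite !big_bool /pr2 /=; lra.
- move=> i x y; rewrite big_ind.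
  case: (ord3P i) => ->; rewrite ?nxt0 ?nxt1 ?nxt2 pE.
  + by rewrite (EC1 (fun a b => ((a == x) && (b == y))%:R)) ind_pr2.
  + by rewrite (EC2 (fun a b => ((a == x) && (b == y))%:R)) ind_pr2.
  + by rewrite (EC3 (fun a b => ((a == x) && (b == y))%:R)) ind_pr2.
Qed.

Lemma Sc_cost : \sum_i Pneq Sc i =
  (B1 + A2 - 2 * S1) + (B2 + A3 - 2 * S2) + (B3 + A1 - 2 * S3).
Proof.
rewrite sum3 /Pneq !big_ind.
rewrite (EN3 (fun a b => (a != b)%:R)).
rewrite (EN1 (fun b a => (a != b)%:R)).
rewrite (EN2 (fun b a => (a != b)%:R)).
rewrite !big_bool /pr2 /=; lra.
Qed.
End Cons.
End Sys.

Lemma card3 (s : {ffun 'I_3 -> bool}) : #|[set i | s i]%classic| = (s o0 + s o1 + s o2)%N.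
Proof.
have hm (i : 'I_3) : (i \in [set j | s j]%classic) = s i.
  by apply/idP/idP => [/set_mem|h]; [done|apply: mem_set].
rewrite -sum1_card big_mkcond !big_ord_recr big_ord0 /= !hm.
have h0 : widen_ord (leqnSn 2) (widen_ord (leqnSn 1) ord_max) = o0 :> 'I_3 by apply: val_inj.
have h1 : widen_ord (leqnSn 2) ord_max = o1 :> 'I_3 by apply: val_inj.
have h2 : ord_max = o2 :> 'I_3 by apply: val_inj.
rewrite h0 h1 h2; by case: (s o0); case: (s o1); case: (s o2).
Qed.

Lemma s_oddE (a : 'I_3 -> R) :
  s_odd a = Num.max (Num.max (- a o0 + a o1 + a o2) (a o0 - a o1 + a o2))
                    (Num.max (a o0 + a o1 - a o2) (- a o0 - a o1 - a o2)).
Proof.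
rewrite /s_odd; set M := Num.max _ _.
set E := (X in sup X).
have hM1 : - a o0 + a o1 + a o2 <= M by rewrite /M !le_max lexx ?orbT.
have hM2 : a o0 - a o1 + a o2 <= M by rewrite /M !le_max lexx ?orbT.
have hM3 : a o0 + a o1 - a o2 <= M by rewrite /M !le_max lexx ?orbT.
have hM4 : - a o0 - a o1 - a o2 <= M by rewrite /M !le_max lexx ?orbT.
have ub : forall x, E x -> x <= M.
  move=> x [s [hodd ->]]; rewrite sum3.
  move: hodd; rewrite card3.
  case: (s o0); case: (s o1); case: (s o2) => //= _; lra.
have inE' : forall b0 b1 b2 : bool, odd (b0 + b1 + b2)%N ->
   E (\sum_i (if mkv b0 b1 b2 i then - a i else a i)).
  by move=> b0 b1 b2 h; exists (mkv b0 b1 b2); split => //; rewrite card3 !mkv0 !mkv1 !mkv2.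
have e1 := inE' true false false isT; have e2 := inE' false true false isT.
have e3 := inE' false false true isT; have e4 := inE' true true true isT.
rewrite !sum3 !mkv0 !mkv1 !mkv2 /= in e1 e2 e3 e4.
have hE : has_ubound E by exists M.
apply/le_anti/andP; split.
  by apply: ge_sup; [exists (- a o0 + a o1 + a o2) | ].
have h1 := ub_le_sup hE e1; have h2 := ub_le_sup hE e2.
have h3 := ub_le_sup hE e3; have h4 := ub_le_sup hE e4.
rewrite /M !ge_max; apply/andP; split; apply/andP; split; lra.
Qed.

Section Main.
Variable p : system R.
Hypothesis hp : forall i, is_dist (p i).

Lemma hsum i : p i (true,true) + p i (true,false) + p i (false,true) + p i (false,false) = 1.
Proof. by have [_ h] := hp i; rewrite sum_bb in h. Qed.
Lemma hnn i x : 0 <= p i x. Proof. by have [h _] := hp i. Qed.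

Lemma EVE i : EV p i = 2 * Aa p i - 1.
Proof. rewrite /EV sum_bb /sgn /Aa /=; have := hsum i; lra. Qed.
Lemma EWE i : EW p i = 2 * Bb p (prv i) - 1.
Proof. rewrite /EW sum_bb /sgn /Bb /=; have := hsum (prv i); lra. Qed.
Lemma EVWE i : EVW p i = 1 - 2 * Aa p i - 2 * Bb p i + 4 * Pp p i.
Proof. rewrite /EVW sum_bb /sgn /Aa /Bb /Pp /=; have := hsum i; lra. Qed.

Section Cpl.
Variable S : {ffun six -> R}.
Hypothesis hS : is_coupling p S.
Definition E (f : six -> R) := \sum_u S u * f u.
Lemma Epos f : (forall u, 0 <= f u) -> 0 <= E f.
Proof. move=> h; apply: sumr_ge0 => u _; apply: mulr_ge0 => //; exact: hS.1.1. Qed.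
Lemma ED f g : E (fun u => f u + g u) = E f + E g.
Proof. by rewrite /E -big_split; apply: eq_bigr => u _; rewrite mulrDr. Qed.
Lemma EB f g : E (fun u => f u - g u) = E f - E g.
Proof. by rewrite /E -sumrB; apply: eq_bigr => u _; rewrite mulrBr. Qed.
Lemma EZ c f : E (fun u => c * f u) = c * E f.
Proof. by rewrite /E mulr_sumr; apply: eq_bigr => u _; rewrite mulrCA. Qed.
Lemma EC c : E (fun _ => c) = c.
Proof. by rewrite /E -big_distrl /= hS.1.2 mul1r. Qed.

Lemma coupE i (F : bool -> bool -> R) :
  E (fun u => F (u.1 i) (u.2 (nxt i))) = \sum_a \sum_b p i (a, b) * F a b.
Proof.
have ptw x y : F x y = \sum_a \sum_b ((x == a) && (y == b))%:R * F a b.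
  by rewrite !big_bool; case: x; case: y; rewrite /= ?mul1r ?mul0r ?addr0 ?add0r.
rewrite /E.
under eq_bigr => u _ do rewrite ptw big_distrr /=.
rewrite exchange_big; apply: eq_bigr => a _.
under eq_bigr => u _ do rewrite big_distrr /=.
rewrite exchange_big; apply: eq_bigr => b _.
under eq_bigr => u _ do rewrite mulrA.
rewrite -big_distrl /=; congr (_ * _).
by rewrite -(hS.2 i a b) big_ind.
Qed.

Lemma E_V i : E (fun u => sgn (u.1 i)) = EV p i.
Proof.
transitivity (\sum_a \sum_b p i (a, b) * (sgn a : R)).
  exact: (coupE i (fun a (b : bool) => sgn a)).
by rewrite /EV sum_pair.
Qed.
Lemma E_W i : E (fun u => sgn (u.2 i)) = EW p i.
Proof.
transitivity (\sum_a \sum_b p (prv i) (a, b) * (sgn b : R)).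
  have := coupE (prv i) (fun (a : bool) b => sgn b); rewrite nxt_prv; exact.
by rewrite /EW sum_pair.
Qed.
Lemma E_VW i : E (fun u => sgn (u.1 i) * sgn (u.2 (nxt i))) = EVW p i.
Proof.
transitivity (\sum_a \sum_b p i (a, b) * ((sgn a : R) * sgn b)).
  exact: (coupE i (fun a b => sgn a * sgn b)).
by rewrite /EVW sum_pair.
Qed.
Lemma E_ne i : E (fun u => (u.1 i != u.2 i)%:R) = Pneq S i.
Proof. by rewrite /Pneq big_ind. Qed.

Lemma LB1 i : `|EV p i - EW p i| <= 2 * Pneq S i.
Proof.
have h1 := Epos (f := fun u => 2 * (u.1 i != u.2 i)%:R - (sgn (u.1 i) - sgn (u.2 i)))
  (fun u => ltac:(by rewrite /sgn; case: (u.1 i); case: (u.2 i) => /=; lra)).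
have h2 := Epos (f := fun u => 2 * (u.1 i != u.2 i)%:R + (sgn (u.1 i) - sgn (u.2 i)))
  (fun u => ltac:(by rewrite /sgn; case: (u.1 i); case: (u.2 i) => /=; lra)).
rewrite EB EZ EB E_ne E_V E_W in h1.
rewrite ED EZ EB E_ne E_V E_W in h2.
rewrite ler_norml; apply/andP; split; lra.
Qed.

Lemma LBc (e0 e1 e2 : R) :
  [\/ [/\ e0 = -1, e1 = 1 & e2 = 1], [/\ e0 = 1, e1 = -1 & e2 = 1],
      [/\ e0 = 1, e1 = 1 & e2 = -1] | [/\ e0 = -1, e1 = -1 & e2 = -1]] ->
  e0 * EVW p o0 + e1 * EVW p o1 + e2 * EVW p o2 - 1 <= 2 * \sum_i Pneq S i.
Proof.
move=> he.
have pt : forall u : six,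
  0 <= 1 + 2 * ((u.1 o0 != u.2 o0)%:R + (u.1 o1 != u.2 o1)%:R + (u.1 o2 != u.2 o2)%:R)
       - (e0 * (sgn (u.1 o0) * sgn (u.2 (nxt o0))) + e1 * (sgn (u.1 o1) * sgn (u.2 (nxt o1)))
          + e2 * (sgn (u.1 o2) * sgn (u.2 (nxt o2)))).
  move=> u; rewrite nxt0 nxt1 nxt2 /sgn.
  case: (u.1 o0); case: (u.1 o1); case: (u.1 o2); case: (u.2 o0); case: (u.2 o1); case: (u.2 o2) => /=;
  case: he => -[-> -> ->]; lra.
have h := Epos pt.
rewrite EB ED EC EZ !ED !E_ne !EZ !E_VW in h.
rewrite sum3; lra.
Qed.


Lemma Peq_marg i : Peq (margVW S i) = 1 - Pneq S i.
Proof.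
rewrite /Peq big_bool !ffunE /= /Pneq !big_ind.
have h1 : \sum_u S u * 1 = 1 by under eq_bigr => u _ do rewrite mulr1; exact: hS.1.2.
have key : (\sum_u S u * ((u.1 i == true) && (u.2 i == true))%:R)
  + (\sum_u S u * ((u.1 i == false) && (u.2 i == false))%:R)
  + (\sum_u S u * (u.1 i != u.2 i)%:R) = \sum_u S u * 1.
  rewrite -!big_split; apply: eq_bigr => u _ /=.
  by case: (u.1 i); case: (u.2 i) => /=; rewrite ?mulr1n ?mulr0n; lra.
lra.
Qed.

Lemma marg_cpl i : is_coupling_VW p i (margVW S i).
Proof.
have hV x : \sum_y margVW S i (x, y) = lawV p i x.
  rewrite big_bool !ffunE /= !big_ind -big_split /=.
  transitivity (\sum_a \sum_b p i (a, b) * ((a == x)%:R : R)).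
    rewrite -(coupE i (fun a (b : bool) => (a == x)%:R)) /E; apply: eq_bigr => u _.
    by case: (u.1 i == x); case: (u.2 i) => /=; rewrite ?mulr1 ?mulr0 ?addr0 ?add0r.
  rewrite /lawV !big_bool; case: x => /=; rewrite ?mulr1 ?mulr0 ?addr0 ?add0r //.
have hW y : \sum_x margVW S i (x, y) = lawW p i y.
  rewrite big_bool !ffunE /= !big_ind -big_split /=.
  transitivity (\sum_a \sum_b p (prv i) (a, b) * ((b == y)%:R : R)).
    have := coupE (prv i) (fun (a : bool) b => (b == y)%:R); rewrite nxt_prv /E => <-.
    apply: eq_bigr => u _.
    by case: (u.2 i == y); case: (u.1 i) => /=; rewrite ?mulr1 ?mulr0 ?addr0 ?add0r.
  rewrite /lawW !big_bool; case: y => /=; rewrite ?mulr1 ?mulr0 ?addr0 ?add0r //.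
split; [split|split].
- move=> xy; rewrite ffunE; apply: sumr_ge0 => u _; exact: hS.1.1.
- rewrite sum_pair; under eq_bigr => x _ do rewrite hV.
  rewrite big_bool /lawV !big_bool /=; have := hsum i; lra.
- exact: hV.
- exact: hW.
Qed.
End Cpl.

Lemma Peq_ub i r : is_coupling_VW p i r -> Peq r <= 1 - `|Aa p i - Bb p (prv i)|.
Proof.
move=> [[nn s1] [hV hW]].
rewrite sum_bb in s1.
have hv := hV true; have hw := hW true.
rewrite /lawV /lawW !big_bool /= in hv hw.
have := nn (true, false); have := nn (false, true).
rewrite /Peq big_bool /Aa /Bb /=.
case: (lerP 0 (p i (true, true) + p i (true, false) - (p (prv i) (true, true) + p (prv i) (false, true)))) => h.
  rewrite ger0_norm //; lra.
rewrite ltr0_norm //; lra.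
Qed.

Definition rco i : {ffun bool * bool -> R} :=
  [ffun xy => pr2 (Aa p i) (Bb p (prv i)) (Num.min (Aa p i) (Bb p (prv i))) xy.1 xy.2].

Lemma cells i : [/\ 0 <= Pp p i, 0 <= Aa p i - Pp p i, 0 <= Bb p i - Pp p i
   & 0 <= 1 - Aa p i - Bb p i + Pp p i].
Proof.
have := hsum i; have := hnn i (true, true); have := hnn i (true, false);
have := hnn i (false, true); have := hnn i (false, false).
rewrite /Aa /Bb /Pp; move=> *; split; lra.
Qed.

Lemma rco_cpl i : is_coupling_VW p i (rco i).
Proof.
have [c1 c2 c3 c4] := cells i; have [d1 d2 d3 d4] := cells (prv i).
have hm : Num.min (Aa p i) (Bb p (prv i)) <= (Aa p i) /\ Num.min (Aa p i) (Bb p (prv i)) <= (Bb p (prv i)) /\ (Num.min (Aa p i) (Bb p (prv i)) = (Aa p i) \/ Num.min (Aa p i) (Bb p (prv i)) = (Bb p (prv i))).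
  rewrite /Num.min; case: leP => h; lra.
have hV : lawV p i true = (Aa p i) /\ lawV p i false = 1 - (Aa p i).
  rewrite /lawV !big_bool /= /Aa; have := hsum i; split; lra.
have hW : lawW p i true = (Bb p (prv i)) /\ lawW p i false = 1 - (Bb p (prv i)).
  rewrite /lawW !big_bool /= /Bb; have := hsum (prv i); split; lra.
split; [split|split].
- move=> [x y]; rewrite ffunE /pr2 /=; case: x; case: y; case: hm => [m1 [m2 [m3|m3]]]; rewrite ?m3; lra.
- rewrite sum_bb !ffunE /pr2 /=; lra.
- move=> x; rewrite big_bool !ffunE /pr2 /=; case: x; case: hV => h1 h2; rewrite ?h1 ?h2; lra.
- move=> y; rewrite big_bool !ffunE /pr2 /=; case: y; case: hW => h1 h2; rewrite ?h1 ?h2; lra.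
Qed.

Lemma Peq_rco i : Peq (rco i) = 1 - `|Aa p i - Bb p (prv i)|.
Proof.
rewrite /Peq big_bool !ffunE /pr2 /=.
case: (leP (Aa p i) (Bb p (prv i))) => h.
  rewrite ler0_norm; [lra|lra].
rewrite gtr0_norm; [lra|lra].
Qed.

Lemma normE i : `|EV p i - EW p i| = 2 * `|Aa p i - Bb p (prv i)|.
Proof.
rewrite EVE EWE.
have -> : 2 * Aa p i - 1 - (2 * Bb p (prv i) - 1) = 2 * (Aa p i - Bb p (prv i)) by ring.
by rewrite normrM ger0_norm.
Qed.

End Main.
End S.

Section Fin.
Variable R : realType.
Variable p : system R.
Hypothesis hp : forall i, is_dist (p i).

Lemma absle (u : R) : u <= `|u| /\ - u <= `|u|.
Proof. by split; [exact: ler_norm | rewrite -normrN ler_norm]. Qed.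

Lemma construct t : Delta0 p <= t -> s_odd (EVW p) - 1 <= 2 * t ->
  exists S, is_coupling p S /\ \sum_i Pneq S i <= t.
Proof.
move=> ht0 ht1.
have hs := s_oddE (EVW p).
have hL1 : - EVW p o0 + EVW p o1 + EVW p o2 <= s_odd (EVW p) by rewrite hs !le_max lexx ?orbT.
have hL2 : EVW p o0 - EVW p o1 + EVW p o2 <= s_odd (EVW p) by rewrite hs !le_max lexx ?orbT.
have hL3 : EVW p o0 + EVW p o1 - EVW p o2 <= s_odd (EVW p) by rewrite hs !le_max lexx ?orbT.
have hL4 : - EVW p o0 - EVW p o1 - EVW p o2 <= s_odd (EVW p) by rewrite hs !le_max lexx ?orbT.
rewrite !(EVWE hp) in hL1 hL2 hL3 hL4.
rewrite /Delta0 sum3 !(normE hp) prv0 prv1 prv2 in ht0.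
have [n0 n0'] := absle (Aa p o0 - Bb p o2).
have [n1 n1'] := absle (Aa p o1 - Bb p o0).
have [n2 n2'] := absle (Aa p o2 - Bb p o1).
have [c01 c02 c03 c04] := cells hp o0.
have [c11 c12 c13 c14] := cells hp o1.
have [c21 c22 c23 c24] := cells hp o2.
clear hs.
have [x [y [z [s1 [s2 [s3 [ok1 ok2 ok3 ok4 hc]]]]]]] :=
  @core _ (Aa p o0) (Bb p o0) (Pp p o0) (Aa p o1) (Bb p o1) (Pp p o1)
     (Aa p o2) (Bb p o2) (Pp p o2) t
     ltac:(lra) ltac:(lra) ltac:(lra) ltac:(lra) ltac:(lra) ltac:(lra)
     ltac:(lra) ltac:(lra) ltac:(lra) ltac:(lra) ltac:(lra) ltac:(lra)
     ltac:(lra) ltac:(lra) ltac:(lra) ltac:(lra) ltac:(lra) ltac:(lra)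
     ltac:(lra) ltac:(lra) ltac:(lra) ltac:(lra) ltac:(lra) ltac:(lra).
exists (Sc p x y z s1 s2 s3); split; first exact: Sc_coupling.
by rewrite (Sc_cost ok1 ok2 ok3 ok4).
Qed.
End Fin.

Unset Implicit Arguments.

Theorem theorem37 (R : realType) (p : system R)
  (hp : forall i : 'I_3, is_dist (p i)) :
  Delta0 p = 2^-1 * \sum_(i < 3) `|EV p i - EW p i|
  /\ Delta_min p = 2^-1 * Num.max (2 * Delta0 p) (s_odd (EVW p) - 1)
  /\ CNTX p = 2^-1 * Num.max 0 (s_odd (EVW p) - 1 - \sum_(i < 3) `|EV p i - EW p i|)
  /\ (noncontextual p <-> s_odd (EVW p) <= 1 + \sum_(i < 3) `|EV p i - EW p i|).
Proof.
set s := s_odd (EVW p).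
set Sn := \sum_(i < 3) `|EV p i - EW p i|.
have hD0 : Delta0 p = 2^-1 * Sn by [].
have hSn : Sn = 2 * `|Aa p o0 - Bb p o2| + 2 * `|Aa p o1 - Bb p o0| + 2 * `|Aa p o2 - Bb p o1|.
  by rewrite /Sn sum3 !(normE hp) prv0 prv1 prv2.
have hs := s_oddE (EVW p).
have LB : forall S, is_coupling p S ->
    Sn <= 2 * \sum_i Pneq S i /\ s - 1 <= 2 * \sum_i Pneq S i.
  move=> S hS; split.
    rewrite /Sn !sum3; have := LB1 hS o0; have := LB1 hS o1; have := LB1 hS o2; lra.
  have l1 : -1 * EVW p o0 + 1 * EVW p o1 + 1 * EVW p o2 - 1 <= 2 * \sum_i Pneq S i.
    by apply: (LBc hS); apply: Or41.
  have l2 : 1 * EVW p o0 + -1 * EVW p o1 + 1 * EVW p o2 - 1 <= 2 * \sum_i Pneq S i.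
    by apply: (LBc hS); apply: Or42.
  have l3 : 1 * EVW p o0 + 1 * EVW p o1 + -1 * EVW p o2 - 1 <= 2 * \sum_i Pneq S i.
    by apply: (LBc hS); apply: Or43.
  have l4 : -1 * EVW p o0 + -1 * EVW p o1 + -1 * EVW p o2 - 1 <= 2 * \sum_i Pneq S i.
    by apply: (LBc hS); apply: Or44.
  suff : s <= 1 + 2 * \sum_i Pneq S i by lra.
  rewrite /s hs !ge_max; apply/andP; split; apply/andP; split; lra.
set T := 2^-1 * Num.max (2 * Delta0 p) (s - 1).
have hT1 : 2 * Delta0 p <= Num.max (2 * Delta0 p) (s - 1) by rewrite le_max lexx.
have hT2 : s - 1 <= Num.max (2 * Delta0 p) (s - 1) by rewrite le_max lexx orbT.
have hT3 : forall X, 2 * Delta0 p <= 2 * X -> s - 1 <= 2 * X -> T <= X.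
  move=> X h1 h2.
  have : Num.max (2 * Delta0 p) (s - 1) <= 2 * X by rewrite ge_max h1 h2.
  rewrite /T; lra.
have DM : Delta_min p = T.
  have h0 : Delta0 p <= T by rewrite /T; lra.
  have h1 : s - 1 <= 2 * T by rewrite /T; lra.
  have [S0 [hS0 hc0]] := construct hp h0 h1.
  have hlbT : forall d, (exists S, is_coupling p S /\ d = \sum_i Pneq S i) -> T <= d.
    move=> d [S [hS ->]]; have [l1 l2] := LB S hS; apply: hT3; lra.
  rewrite /Delta_min; apply/le_anti/andP; split.
    have hlb : has_lbound [set d | exists S, is_coupling p S /\ d = \sum_i Pneq S i]%classic.
      by exists T => d hd; apply: hlbT.
    have hin : [set d | exists S, is_coupling p S /\ d = \sum_i Pneq S i]%classic (\sum_i Pneq S0 i).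
      by exists S0.
    exact: le_trans (ge_inf hlb hin) hc0.
  apply: lb_le_inf; first by exists (\sum_i Pneq S0 i); exists S0.
  by move=> d hd; apply: hlbT.
split; first by [].
split; first exact: DM.
split.
  rewrite /CNTX DM /T hD0.
  case: (leP (2 * (2^-1 * Sn)) (s - 1)) => h1; case: (leP 0 (s - 1 - Sn)) => h2; lra.
split.
  move=> [S [hS hmax]].
  have hP : forall i, Pneq S i <= `|Aa p i - Bb p (prv i)|.
    move=> i; have [_ hm] := hmax i; have := hm _ (rco_cpl hp i).
    rewrite Peq_rco (Peq_marg hS); lra.
  have [_ l2] := LB S hS.
  rewrite sum3 in l2; rewrite hSn.
  have := hP o0; have := hP o1; have := hP o2; rewrite ?prv0 ?prv1 ?prv2; lra.
move=> hineq.
have h1 : s - 1 <= 2 * Delta0 p by rewrite hD0; lra.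
have [S [hS hc]] := construct hp (lexx _) h1.
exists S; split => // i.
have hPi : forall j, `|Aa p j - Bb p (prv j)| <= Pneq S j.
  by move=> j; have := LB1 hS j; rewrite (normE hp); lra.
have hup : Pneq S i <= `|Aa p i - Bb p (prv i)|.
  have := hPi o0; have := hPi o1; have := hPi o2.
  rewrite sum3 hD0 hSn in hc.
  by case: (ord3P i) => ->; rewrite ?prv0 ?prv1 ?prv2; lra.
split; first exact: marg_cpl.
move=> r hr; rewrite (Peq_marg hS); have := Peq_ub hr; lra.
Qed.
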